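(* Let $X,X_1,X_2,\dots$ be random variables in a sub-linear expectation space $(\Omega,\mathscr H,\hat{\mathbb E})$ with $\{X_n\}$ independent, $X_n\overset d=X$ for all $n$, and $\hat{\mathbb E}[X]=\hat{\mathcal E}[X]=0$. Let $S_n=\sum_{i=1}^nX_i$, $V_n^2=\sum_{i=1}^nX_i^2$, $l(x)=\hat{\mathbb E}[X^2\wedge x^2]$, and assume: (I) $\mathbb V(|X|\ge x)=o(x^{-2}l(x))$ as $x\to\infty$; (II) $\limsup_{x\to\infty}\hat{\mathbb E}[X^2\wedge x^2]/\hat{\mathcal E}[X^2\wedge x^2]<\infty$; (III) $\hat{\mathbb E}[(|X|-c)^+]\to0$ as $c\to\infty$; (IV) $x_n\to\infty$ and $x_n=o(\sqrt n)$. Let $b_0=\inf\{x\ge0:l(x)>0\}$ and $z_n=\inf\{s\ge b_0+1: l(s)/s^2\le x_n^2/n\}$. Then, as $n\to\infty$, $$\mathbb V\big(S_n\ge x_nV_n,\ V_n^2\ge 9nl(z_n)\big)\le\exp\{-x_n^2+o(x_n^2)\}.$$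
   Context: Sub-linear expectation space: $\mathscr H$ is a linear space of real functions on a measurable space $(\Omega,\mathcal F)$, closed under $\varphi(X_1,\dots,X_n)$ for $\varphi$ bounded continuous or locally Lipschitz with polynomial growth ($|\varphi(x)-\varphi(y)|\le C(1+|x|^m+|y|^m)|x-y|$); $\hat{\mathbb E}:\mathscr H\to[-\infty,\infty]$ is monotone, constant preserving, sub-additive and positively homogeneous. $\hat{\mathcal E}[X]=-\hat{\mathbb E}[-X]$; $\mathbb V(A)=\inf\{\hat{\mathbb E}[\xi]:I_A\le\xi,\xi\in\mathscr H\}$. Independence: $\mathbf Y$ is independent of $\mathbf X$ if $\hat{\mathbb E}[\varphi(\mathbf X,\mathbf Y)]=\hat{\mathbb E}[\hat{\mathbb E}[\varphi(\mathbf x,\mathbf Y)]|_{\mathbf x=\mathbf X}]$ for all such locally Lipschitz $\varphi$ (whenever the relevant expectations are finite); $\{X_n\}$ is independent if $X_{i+1}$ is independent of $(X_1,\dots,X_i)$ for each $i$. $X_n\overset d=X$ means $\hat{\mathbb E}[\varphi(X_n)]=\hat{\mathbb E}[\varphi(X)]$ for all locally Lipschitz $\varphi$ of polynomial growth. $a\wedge b=\min(a,b)$. *)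

(* Defs.v *)
From Stdlib Require Import Reals Lra.
From Coquelicot Require Import Coquelicot.
Open Scope R_scope.

(* Vectors in R^n are represented as  nat -> R , only coordinates      *)
(* 0..n-1 being relevant.  |x|_n = sum_{i<n} |x_i|  (any norm on R^n   *)
(* gives the same function classes below).                             *)
Fixpoint vnorm (n : nat) (x : nat -> R) : R :=
  match n with
  | O => 0
  | S k => vnorm k x + Rabs (x k)
  end.

Definition Cb (n : nat) (phi : (nat -> R) -> R) : Prop :=
  (forall x y, (forall i, (i < n)%nat -> x i = y i) -> phi x = phi y) /\
  (exists M, forall x, Rabs (phi x) <= M) /\
  (forall x eps, 0 < eps -> exists delta, 0 < delta /\
     forall y, vnorm n (fun i => y i - x i) < delta -> Rabs (phi y - phi x) < eps).

Definition Clip (n : nat) (phi : (nat -> R) -> R) : Prop :=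
  exists (C : R) (m : nat), forall x y,
    Rabs (phi x - phi y)
      <= C * (1 + vnorm n x ^ m + vnorm n y ^ m) * vnorm n (fun i => x i - y i).

Definition Clip1 (phi : R -> R) : Prop :=
  exists (C : R) (m : nat), forall x y,
    Rabs (phi x - phi y) <= C * (1 + Rabs x ^ m + Rabs y ^ m) * Rabs (x - y).

(* Sub-linear expectation space (Omega, H, E).  E is defined on all    *)
(* functions Omega -> R, but the axioms only constrain it on H.        *)
Record SLESpace (Omega : Type) := {
  H : (Omega -> R) -> Prop;
  E : (Omega -> R) -> Rbar;
  H_zero : H (fun _ => 0);
  H_add : forall X Y, H X -> H Y -> H (fun w => X w + Y w);
  H_scal : forall (c : R) X, H X -> H (fun w => c * X w);
  H_comp : forall (n : nat) (Xs : nat -> Omega -> R) (phi : (nat -> R) -> R),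
      (forall i, (i < n)%nat -> H (Xs i)) -> (Cb n phi \/ Clip n phi) ->
      H (fun w => phi (fun i => Xs i w));
  E_mono : forall X Y, H X -> H Y -> (forall w, X w <= Y w) -> Rbar_le (E X) (E Y);
  E_const : forall c : R, E (fun _ => c) = Finite c;
  E_subadd : forall X Y, H X -> H Y -> ex_Rbar_plus (E X) (E Y) ->
      Rbar_le (E (fun w => X w + Y w)) (Rbar_plus (E X) (E Y));
  E_poshom : forall (lam : R) X, H X -> 0 < lam ->
      E (fun w => lam * X w) = Rbar_mult (Finite lam) (E X)
}.
Arguments H {Omega} s _.
Arguments E {Omega} s _.

Definition Elow {Omega} (Sp : SLESpace Omega) (X : Omega -> R) : Rbar :=
  Rbar_opp (E Sp (fun w => - X w)).

Definition Vcap {Omega} (Sp : SLESpace Omega) (A : Omega -> Prop) : Rbar :=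
  Glb_Rbar (fun r : R => exists xi : Omega -> R,
    H Sp xi /\ (forall w, 0 <= xi w /\ (A w -> 1 <= xi w)) /\ E Sp xi = Finite r).

Definition vjoin (n : nat) (x y : nat -> R) : nat -> R :=
  fun k => if (k <? n)%nat then x k else y (k - n)%nat.

Definition indep {Omega} (Sp : SLESpace Omega) (n m : nat)
    (Xv Yv : Omega -> nat -> R) : Prop :=
  forall phi : (nat -> R) -> R, Clip (n + m) phi ->
    let psi := fun x : nat -> R => real (E Sp (fun w => phi (vjoin n x (Yv w)))) in
    (forall x, is_finite (E Sp (fun w => Rabs (phi (vjoin n x (Yv w)))))) ->
    is_finite (E Sp (fun w => Rabs (psi (Xv w)))) ->
    E Sp (fun w => phi (vjoin n (Xv w) (Yv w))) = E Sp (fun w => psi (Xv w)).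

(* {X_n}_{n>=1} is independent: X_{i+1} independent of (X_1,...,X_i). *)
Definition indep_seq {Omega} (Sp : SLESpace Omega) (X : nat -> Omega -> R) : Prop :=
  forall i : nat, (1 <= i)%nat ->
    indep Sp i 1 (fun w k => X (S k) w) (fun w _ => X (S i) w).

Definition same_dist {Omega} (Sp : SLESpace Omega) (Y Z : Omega -> R) : Prop :=
  forall phi : R -> R, Clip1 phi -> E Sp (fun w => phi (Y w)) = E Sp (fun w => phi (Z w)).

Fixpoint sum1 (f : nat -> R) (n : nat) : R :=
  match n with
  | O => 0
  | S k => sum1 f k + f (S k)
  end.

(* l(x) = E[X^2 /\ x^2]  (finite: it lies in [0, x^2]) *)
Definition lfun {Omega} (Sp : SLESpace Omega) (X : Omega -> R) (x : R) : R :=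
  real (E Sp (fun w => Rmin (X w ^ 2) (x ^ 2))).

Definition b0 {Omega} (Sp : SLESpace Omega) (X : Omega -> R) : R :=
  real (Glb_Rbar (fun x => 0 <= x /\ 0 < lfun Sp X x)).

Definition zn {Omega} (Sp : SLESpace Omega) (X : Omega -> R) (xn : R) (n : nat) : R :=
  real (Glb_Rbar (fun s => b0 Sp X + 1 <= s /\
                           lfun Sp X s / s ^ 2 <= xn ^ 2 / INR n)).

(* Main.v *)
Require Import Defs.
From Stdlib Require Import Reals Lra Lia ZArith Classical FunctionalExtensionality.
From Coquelicot Require Import Coquelicot.
Open Scope R_scope.


Lemma exp_le' a b : a <= b -> exp a <= exp b.
Proof. intros [h|h]. left; apply exp_increasing; auto. subst; lra. Qed.

Lemma exp_ub1 y : exp y <= 1 + y * exp y.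
Proof.
  pose proof (exp_ineq1_le (- y)). rewrite exp_Ropp in H.
  pose proof (exp_pos y).
  assert (exp y * (1 - y) <= exp y * / exp y) by (apply Rmult_le_compat_l; lra).
  rewrite Rinv_r in H1; lra.
Qed.

Lemma exp_quad y t : 0 <= t -> y <= t -> exp y <= 1 + y + exp t * y ^ 2.
Proof.
  intros ht hy. pose proof (exp_ub1 y). pose proof (exp_ineq1_le y).
  assert (1 <= exp t) by (pose proof (exp_le' 0 t ht); rewrite exp_0 in H1; lra).
  destruct (Rle_dec 0 y).
  - assert (exp y - 1 <= y * exp y) by lra.
    assert (exp y <= exp t) by (apply exp_le'; lra).
    assert (y * (exp y - 1) <= y * (y * exp y)) by (apply Rmult_le_compat_l; lra).
    assert (y*y*exp y <= y*y*exp t) by (apply Rmult_le_compat_l; nra).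
    nra.
  - assert (y * (exp y - 1) <= y * y) by nra.
    assert (y*y <= exp t * (y*y)) by nra. nra.
Qed.

Lemma exp_lin s r : 0 <= s -> 0 <= r <= 1 -> exp (s * r) <= 1 + s * exp s * r.
Proof.
  intros hs hr. pose proof (exp_ub1 (s*r)).
  assert (exp (s*r) <= exp s) by (apply exp_le'; nra).
  assert (s*r*exp (s*r) <= s*r*exp s) by (apply Rmult_le_compat_l; nra). nra.
Qed.

Lemma exp_lip a b T : a <= T -> b <= T -> Rabs (exp a - exp b) <= exp T * Rabs (a - b).
Proof.
  assert (forall a b, a <= b -> b <= T -> exp b - exp a <= exp T * (b - a)).
  { intros a0 b0 h1 h2. pose proof (exp_ub1 (b0 - a0)).
    pose proof (exp_pos a0).
    assert (exp a0 * exp (b0 - a0) <= exp a0 * (1 + (b0-a0)*exp (b0-a0))) by (apply Rmult_le_compat_l; lra).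
    rewrite <- exp_plus in H1. replace (a0 + (b0 - a0)) with b0 in H1 by ring.
    assert (exp a0 * exp (b0 - a0) = exp b0) by (rewrite <- exp_plus; f_equal; ring).
    assert (exp b0 <= exp T) by (apply exp_le'; lra).
    nra. }
  intros ha hb. destruct (Rle_dec a b).
  - pose proof (H a b r hb). assert (exp a <= exp b) by (apply exp_le'; lra).
    rewrite Rabs_left1 by lra. rewrite Rabs_left1 by lra. lra.
  - pose proof (H b a ltac:(lra) ha). assert (exp b <= exp a) by (apply exp_le'; lra).
    rewrite Rabs_pos_eq by lra. rewrite Rabs_pos_eq by lra. lra.
Qed.

Lemma pow_le_exp c y n : 0 <= c -> c <= 1 + y -> c ^ n <= exp (INR n * y).
Proof.
  intros h1 h2. pose proof (exp_ineq1_le y).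
  induction n.
  - simpl. rewrite Rmult_0_l, exp_0. lra.
  - rewrite S_INR. replace ((INR n + 1) * y) with (INR n * y + y) by ring.
    rewrite exp_plus. simpl. rewrite Rmult_comm.
    apply Rmult_le_compat; try lra. apply pow_le; lra.
Qed.

Definition hcl (u : R) := Rmax (-1) (Rmin u 1).
Definition rcl (u : R) := Rmin 1 (Rmax 0 (2 * Rabs u - 1)).

Ltac rsplit := unfold hcl, rcl, Rmin, Rmax, Rabs in *; repeat (destruct Rle_dec); repeat (destruct Rcase_abs).

Lemma hcl_lip a b : Rabs (hcl a - hcl b) <= Rabs (a - b).
Proof. unfold hcl, Rmin, Rmax, Rabs; repeat (destruct Rle_dec); repeat (destruct Rcase_abs); lra. Qed.

Lemma rcl_lip a b : Rabs (rcl a - rcl b) <= 2 * Rabs (a - b).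
Proof. unfold rcl, Rmin, Rmax, Rabs; repeat (destruct Rle_dec); repeat (destruct Rcase_abs); lra. Qed.

Lemma hcl_bnd u : -1 <= hcl u <= 1.
Proof. unfold hcl, Rmin, Rmax; repeat (destruct Rle_dec); lra. Qed.

Lemma rcl_bnd u : 0 <= rcl u <= 1.
Proof. unfold rcl, Rmin, Rmax; repeat (destruct Rle_dec); lra. Qed.

Lemma hcl_sq u : hcl u ^ 2 <= Rmin (u ^ 2) 1.
Proof.
  unfold hcl, Rmin, Rmax; repeat (destruct Rle_dec); simpl; nra.
Qed.

Lemma hcl_le u : hcl u <= u + Rmax (Rabs u - 1) 0.
Proof. unfold hcl, Rmin, Rmax, Rabs; repeat (destruct Rle_dec); repeat (destruct Rcase_abs); lra. Qed.

Lemma rcl_pos u : 0 < rcl u -> 1/2 < Rabs u.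
Proof. unfold rcl, Rmin, Rmax, Rabs; repeat (destruct Rle_dec); repeat (destruct Rcase_abs); lra. Qed.

Lemma rcl_one u : 1 <= Rabs u -> rcl u = 1.
Proof. unfold rcl, Rmin, Rmax, Rabs; repeat (destruct Rle_dec); repeat (destruct Rcase_abs); lra. Qed.

Lemma pointwise u c : 0 < c -> u <= hcl u + (1 + c/2) * rcl u + u ^ 2 / (2 * c).
Proof.
  intros hc. pose proof (rcl_bnd u).
  assert (0 <= u^2/(2*c)) by (apply Rdiv_le_0_compat; nra).
  destruct (Rle_dec 1 u).
  - rewrite rcl_one by (rewrite Rabs_pos_eq; lra).
    assert (hcl u = 1) by (unfold hcl, Rmin, Rmax; repeat destruct Rle_dec; lra).
    rewrite H1.
    assert (u <= c/2 + u^2/(2*c)).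
    { assert (2*c*u <= c*c + u^2) by (pose proof (pow2_ge_0 (u - c)); nra).
      apply Rmult_le_reg_l with (2*c). lra.
      replace (2*c*(c/2 + u^2/(2*c))) with (c*c + u^2) by (field; lra). lra. }
    lra.
  - destruct (Rle_dec u (-1)).
    + assert (hcl u = -1) by (unfold hcl, Rmin, Rmax; repeat destruct Rle_dec; lra).
      rewrite H1. assert (0 <= (1 + c/2) * rcl u) by (apply Rmult_le_pos; lra). lra.
    + assert (hcl u = u) by (unfold hcl, Rmin, Rmax; repeat destruct Rle_dec; lra).
      rewrite H1. assert (0 <= (1 + c/2) * rcl u) by (apply Rmult_le_pos; lra). lra.
Qed.

Lemma Hcst {Om} (Sp : SLESpace Om) c : H Sp (fun _ => c).
Proof.
  pose proof (H_comp Om Sp 0 (fun _ _ => 0) (fun _ => c)) as h. simpl in h.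
  apply h. intros i hi; lia. right. exists 0, 0%nat. intros. simpl.
  rewrite Rminus_diag, Rabs_R0. lra.
Qed.

Lemma H1 {Om} (Sp : SLESpace Om) (X : Om -> R) phi C :
  H Sp X -> (forall a b, Rabs (phi a - phi b) <= C * (1 + Rabs a + Rabs b) * Rabs (a - b)) ->
  H Sp (fun w => phi (X w)).
Proof.
  intros hX hphi.
  pose proof (H_comp Om Sp 1 (fun _ => X) (fun v => phi (v 0%nat))) as h. simpl in h.
  apply h. intros; auto. right. exists C, 1%nat. intros x y. simpl.
  rewrite !Rplus_0_l, !Rmult_1_r. apply hphi.
Qed.

Lemma H1lip {Om} (Sp : SLESpace Om) (X : Om -> R) phi C :
  H Sp X -> 0 <= C -> (forall a b, Rabs (phi a - phi b) <= C * Rabs (a - b)) ->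
  H Sp (fun w => phi (X w)).
Proof.
  intros hX hC hphi. apply H1 with C; auto. intros a b.
  eapply Rle_trans. apply hphi. apply Rmult_le_compat_r. apply Rabs_pos.
  pose proof (Rabs_pos a). pose proof (Rabs_pos b). nra.
Qed.

Definition Eub {Om} (Sp : SLESpace Om) Y a := Rbar_le (E Sp Y) (Finite a).

Lemma Eub_mono {Om} (Sp : SLESpace Om) Y1 Y2 a :
  H Sp Y1 -> H Sp Y2 -> (forall w, Y1 w <= Y2 w) -> Eub Sp Y2 a -> Eub Sp Y1 a.
Proof. unfold Eub; intros. eapply Rbar_le_trans. apply E_mono; eauto. auto. Qed.

Lemma Eub_weak {Om} (Sp : SLESpace Om) Y a b : Eub Sp Y a -> a <= b -> Eub Sp Y b.
Proof. unfold Eub; intros. eapply Rbar_le_trans; eauto. Qed.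

Lemma Eub_const {Om} (Sp : SLESpace Om) c : Eub Sp (fun _ => c) c.
Proof. unfold Eub; rewrite E_const; simpl; lra. Qed.

Lemma Eub_add {Om} (Sp : SLESpace Om) Y1 Y2 a b :
  H Sp Y1 -> H Sp Y2 -> Eub Sp Y1 a -> Eub Sp Y2 b -> Eub Sp (fun w => Y1 w + Y2 w) (a + b).
Proof.
  unfold Eub; intros h1 h2 e1 e2.
  assert (ex_Rbar_plus (E Sp Y1) (E Sp Y2)).
  { destruct (E Sp Y1), (E Sp Y2); simpl in *; auto; contradiction. }
  eapply Rbar_le_trans. apply E_subadd; auto.
  destruct (E Sp Y1), (E Sp Y2); simpl in *; try lra; try contradiction; auto.
Qed.

Lemma Eub_scal {Om} (Sp : SLESpace Om) Y a lam :
  H Sp Y -> 0 < lam -> Eub Sp Y a -> Eub Sp (fun w => lam * Y w) (lam * a).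
Proof.
  unfold Eub; intros h hl e. rewrite E_poshom; auto.
  destruct (E Sp Y); simpl in *; try contradiction.
  apply Rmult_le_compat_l; lra.
  unfold Rbar_mult, Rbar_mult'. destruct (Rle_dec 0 lam); [|lra].
  destruct (Rle_lt_or_eq_dec 0 lam r); simpl; auto. lra.
Qed.

Lemma Efin {Om} (Sp : SLESpace Om) Y a b :
  H Sp Y -> (forall w, a <= Y w <= b) -> exists r, E Sp Y = Finite r /\ a <= r <= b.
Proof.
  intros hY hb.
  pose proof (E_mono Om Sp (fun _ => a) Y (Hcst Sp a) hY (fun w => proj1 (hb w))) as e1.
  pose proof (E_mono Om Sp Y (fun _ => b) hY (Hcst Sp b) (fun w => proj2 (hb w))) as e2.
  rewrite E_const in e1, e2. destruct (E Sp Y); simpl in *; try contradiction.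
  exists r; auto.
Qed.

Lemma Eub_lower {Om} (Sp : SLESpace Om) Y r a :
  H Sp Y -> E Sp Y = Finite r -> Eub Sp Y a -> r <= a.
Proof. unfold Eub; intros _ e h; rewrite e in h; simpl in h; auto. Qed.

Lemma Vcap_ub {Om} (Sp : SLESpace Om) (A : Om -> Prop) xi a :
  H Sp xi -> (forall w, 0 <= xi w /\ (A w -> 1 <= xi w)) -> Eub Sp xi a ->
  Rbar_le (Vcap Sp A) (Finite a).
Proof.
  intros hx hb he.
  pose proof (E_mono Om Sp (fun _ => 0) xi (Hcst Sp 0) hx (fun w => proj1 (hb w))) as e1.
  rewrite E_const in e1. unfold Eub in he.
  destruct (E Sp xi) eqn:Ex; simpl in *; try contradiction.
  unfold Vcap. destruct (Glb_Rbar_correct (fun r0 : R => exists xi0 : Om -> R,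
    H Sp xi0 /\ (forall w, 0 <= xi0 w /\ (A w -> 1 <= xi0 w)) /\ E Sp xi0 = Finite r0)) as [h1 _].
  eapply Rbar_le_trans. apply h1. exists xi. split; [auto|split; [auto|exact Ex]]. simpl; auto.
Qed.

Lemma Vcap_lb {Om} (Sp : SLESpace Om) (A : Om -> Prop) g :
  H Sp g -> (forall w, 0 <= g w <= 1) -> (forall w, 0 < g w -> A w) ->
  Rbar_le (E Sp g) (Vcap Sp A).
Proof.
  intros hg hb hA. unfold Vcap.
  destruct (Glb_Rbar_correct (fun r0 : R => exists xi0 : Om -> R,
    H Sp xi0 /\ (forall w, 0 <= xi0 w /\ (A w -> 1 <= xi0 w)) /\ E Sp xi0 = Finite r0)) as [_ h2].
  apply h2. intros r [xi [hx [hxb he]]]. rewrite <- he. apply E_mono; auto.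
  intros w. destruct (hb w). destruct (Rle_lt_dec (g w) 0).
  - destruct (hxb w); lra.
  - destruct (hxb w) as [hx0 hx1]. specialize (hx1 (hA w r0)). lra.
Qed.

Fixpoint prodf (f : R -> R) (n : nat) (v : nat -> R) : R :=
  match n with O => 1 | S k => prodf f k v * f (v k) end.

Lemma prodf_S f n v : prodf f (S n) v = prodf f n v * f (v n).
Proof. reflexivity. Qed.

Lemma prodf_pos f a n v : 0 < a -> (forall y, a <= f y) -> 0 < prodf f n v.
Proof. intros ha hf. induction n. simpl; lra. rewrite prodf_S. pose proof (hf (v n)). nra. Qed.

Lemma prodf_ext f n v v' : (forall k, (k < n)%nat -> v k = v' k) -> prodf f n v = prodf f n v'.
Proof.
  induction n; simpl; intros; auto. rewrite IHn by (intros; apply H; lia).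
  rewrite H by lia. auto.
Qed.

Lemma prodf_bnd f B n v : (forall y, 0 <= f y <= B) -> 0 <= prodf f n v <= B ^ n.
Proof.
  intros hf. induction n; simpl. lra. destruct (hf (v n)).
  split. apply Rmult_le_pos; lra. rewrite Rmult_comm. apply Rmult_le_compat; lra.
Qed.

Lemma vnorm_pos n d : 0 <= vnorm n d.
Proof. induction n; simpl. lra. pose proof (Rabs_pos (d n)); lra. Qed.

Lemma prodf_lip f B L n x y : (forall y, 0 <= f y <= B) -> 1 <= B -> 0 <= L ->
  (forall y1 y2, Rabs (f y1 - f y2) <= L * Rabs (y1 - y2)) ->
  Rabs (prodf f n x - prodf f n y) <= L * B ^ n * vnorm n (fun i => x i - y i).
Proof.
  intros hf hB hL hl. induction n; simpl.
  - rewrite Rminus_diag, Rabs_R0. lra.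
  - replace (prodf f n x * f (x n) - prodf f n y * f (y n)) with
      ((prodf f n x - prodf f n y) * f (x n) + prodf f n y * (f (x n) - f (y n))) by ring.
    eapply Rle_trans. apply Rabs_triang. rewrite !Rabs_mult.
    destruct (hf (x n)). destruct (prodf_bnd f B n y hf).
    rewrite (Rabs_pos_eq (f (x n))) by lra. rewrite (Rabs_pos_eq (prodf f n y)) by lra.
    pose proof (vnorm_pos n (fun i => x i - y i)).
    pose proof (Rabs_pos (prodf f n x - prodf f n y)).
    pose proof (hl (x n) (y n)). pose proof (Rabs_pos (x n - y n)).
    pose proof (Rabs_pos (f (x n) - f (y n))).
    assert (1 <= B ^ n) by (apply pow_R1_Rle; lra).
    assert (Rabs (prodf f n x - prodf f n y) * f (x n) <= L * B ^ n * vnorm n (fun i => x i - y i) * B)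
      by (apply Rmult_le_compat; lra).
    assert (prodf f n y * Rabs (f (x n) - f (y n)) <= B ^ n * (L * Rabs (x n - y n)))
      by (apply Rmult_le_compat; lra).
    assert (0 <= L * B^n) by (apply Rmult_le_pos; lra).
    assert (L * B ^ n * Rabs (x n - y n) <= L * (B * B ^ n) * Rabs (x n - y n)).
    { apply Rmult_le_compat_r. lra. apply Rmult_le_compat_l. lra. nra. }
    nra.
Qed.

Lemma prodf_Clip f B L n : (forall y, 0 <= f y <= B) -> 1 <= B -> 0 <= L ->
  (forall y1 y2, Rabs (f y1 - f y2) <= L * Rabs (y1 - y2)) -> Clip n (prodf f n).
Proof.
  intros. exists (L * B ^ n), 0%nat. intros x y. simpl.
  eapply Rle_trans. apply (prodf_lip f B L); auto.
  apply Rmult_le_compat_r. apply vnorm_pos.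
  assert (0 <= L * B ^n) by (apply Rmult_le_pos; auto; apply pow_le; lra). nra.
Qed.

Lemma prodf_exp g n (Xs : nat -> R) :
  prodf (fun v => exp (g v)) n (fun k => Xs (S k)) = exp (sum1 (fun i => g (Xs i)) n).
Proof.
  induction n; simpl. rewrite exp_0; auto. rewrite IHn, exp_plus; auto.
Qed.

Lemma prod_formula {Om} (Sp : SLESpace Om) X Xs f a B L c :
  H Sp X -> (forall n, (1 <= n)%nat -> H Sp (Xs n)) -> indep_seq Sp Xs ->
  (forall n, (1 <= n)%nat -> same_dist Sp (Xs n) X) ->
  0 < a -> 1 <= B -> 0 <= L -> (forall y, a <= f y <= B) ->
  (forall y1 y2, Rabs (f y1 - f y2) <= L * Rabs (y1 - y2)) ->
  E Sp (fun w => f (X w)) = Finite c ->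
  forall n, E Sp (fun w => prodf f n (fun k => Xs (S k) w)) = Finite (c ^ n).
Proof.
  intros hX hXs hind hsd ha hB hL hf hl hc.
  assert (hf0 : forall y, 0 <= f y <= B) by (intros y; destruct (hf y); lra).
  assert (hHf : forall Y, H Sp Y -> H Sp (fun w => f (Y w))) by (intros; apply H1lip with L; auto).
  assert (hcl : Clip1 f).
  { exists L, 0%nat. intros. simpl. eapply Rle_trans. apply hl.
    apply Rmult_le_compat_r. apply Rabs_pos. lra. }
  assert (hEf : forall i, (1 <= i)%nat -> E Sp (fun w => f (Xs i w)) = Finite c).
  { intros i hi. rewrite <- hc. apply hsd; auto. }
  assert (cpos : a <= c).
  { destruct (Efin Sp (fun w => f (X w)) a B) as [r [hr1 hr2]]; auto.
    rewrite hc in hr1; injection hr1; intros; subst; lra. }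
  assert (hHp : forall n, H Sp (fun w => prodf f n (fun k => Xs (S k) w))).
  { intros n. apply (H_comp Om Sp n (fun k => Xs (S k)) (prodf f n)).
    intros; apply hXs; lia. right. apply prodf_Clip with B L; auto. }
  induction n.
  - simpl. rewrite E_const. auto.
  - destruct n.
    + simpl. replace (fun w => 1 * f (Xs 1%nat w)) with (fun w => f (Xs 1%nat w))
        by (apply functional_extensionality; intros; ring).
      rewrite hEf; auto. rewrite Rmult_1_r; auto.
    + set (i := S n) in *.
      pose proof (hind i ltac:(unfold i; lia)) as hi.
      unfold indep in hi.
      specialize (hi (prodf f (i + 1))).
      assert (Clip (i + 1) (prodf f (i + 1))) by (apply prodf_Clip with B L; auto).
      specialize (hi H).
      assert (key : forall x : nat -> R, (fun w => prodf f (i + 1) (vjoin i x (fun _ : nat => Xs (S i) w)))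
                       = (fun w => prodf f i x * f (Xs (S i) w))).
      { intros x. apply functional_extensionality; intros w.
        replace (i + 1)%nat with (S i) by lia. rewrite prodf_S. f_equal.
        apply prodf_ext. intros k hk. unfold vjoin. replace (k <? i)%nat with true; auto.
        symmetry; apply Nat.ltb_lt; auto.
        unfold vjoin. replace (i <? i)%nat with false; auto. symmetry; apply Nat.ltb_ge; lia. }
      assert (key2 : forall x : nat -> R, E Sp (fun w => prodf f (i + 1) (vjoin i x (fun _ : nat => Xs (S i) w)))
                       = Finite (prodf f i x * c)).
      { intros x. rewrite key. destruct (prodf_bnd f B i x hf0) as [p0 _].
        assert (0 < prodf f i x) by (apply prodf_pos with a; auto; intros; apply hf).
        rewrite E_poshom; auto. rewrite hEf by lia. simpl; auto. apply hHf, hXs; lia. }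
      cbv zeta in hi.
      assert (psiE : (fun w => real (E Sp (fun w0 => prodf f (i + 1) (vjoin i (fun k => Xs (S k) w) (fun _ : nat => Xs (S i) w0)))))
                     = fun w => c * prodf f i (fun k => Xs (S k) w)).
      { apply functional_extensionality; intros w. rewrite key2. simpl. ring. }
      assert (lhsE : (fun w => prodf f (i + 1) (vjoin i (fun k => Xs (S k) w) (fun _ : nat => Xs (S i) w)))
                     = fun w => prodf f (S i) (fun k => Xs (S k) w)).
      { apply functional_extensionality; intros w. replace (i+1)%nat with (S i) by lia.
        apply prodf_ext. intros k hk. unfold vjoin. destruct (k <? i)%nat eqn:e; auto.
        apply Nat.ltb_ge in e. replace k with i by lia. auto. }
      rewrite lhsE in hi. rewrite hi.
      * replace (fun w => real (E Sp (fun w0 => prodf f (i + 1) (vjoin i (fun k => Xs (S k) w) (fun _ : nat => Xs (S i) w0)))))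
           with (fun w => c * prodf f i (fun k => Xs (S k) w)) by (symmetry; exact psiE).
        rewrite E_poshom; auto; try lra. rewrite IHn. simpl. f_equal; ring.
      * intros x. replace (fun w => Rabs (prodf f (i + 1) (vjoin i x (fun _ : nat => Xs (S i) w))))
           with (fun w => prodf f (i + 1) (vjoin i x (fun _ : nat => Xs (S i) w))).
        rewrite key2; reflexivity.
        apply functional_extensionality; intros w. rewrite Rabs_pos_eq; auto.
        apply (prodf_bnd f B); auto.
      * replace (fun w => Rabs (real (E Sp (fun w0 => prodf f (i + 1) (vjoin i (fun k => Xs (S k) w) (fun _ : nat => Xs (S i) w0))))))
           with (fun w => c * prodf f i (fun k => Xs (S k) w)).
        rewrite E_poshom; auto; try lra. rewrite IHn. reflexivity.
        rewrite <- psiE. apply functional_extensionality; intros w. rewrite Rabs_pos_eq; auto.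
        rewrite key2. cbn [real]. apply Rmult_le_pos. apply (prodf_bnd f B); auto. lra.
Qed.

Lemma Hmin {Om} (Sp : SLESpace Om) X s : H Sp X -> H Sp (fun w => Rmin (X w ^ 2) (s ^ 2)).
Proof.
  intros hX. apply H1 with (phi := fun a => Rmin (a ^ 2) (s ^ 2)) (C := 1); auto.
  intros a b. assert (Rabs (Rmin (a^2) (s^2) - Rmin (b^2) (s^2)) <= Rabs (a^2 - b^2)).
  { unfold Rmin, Rabs; repeat destruct Rle_dec; repeat destruct Rcase_abs; lra. }
  eapply Rle_trans. apply H.
  replace (a^2 - b^2) with ((a+b)*(a-b)) by ring. rewrite Rabs_mult.
  apply Rmult_le_compat_r. apply Rabs_pos. pose proof (Rabs_triang a b). lra.
Qed.

Lemma lfun_spec {Om} (Sp : SLESpace Om) X s : H Sp X ->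
  E Sp (fun w => Rmin (X w ^ 2) (s ^ 2)) = Finite (lfun Sp X s) /\ 0 <= lfun Sp X s <= s ^ 2.
Proof.
  intros hX. destruct (Efin Sp (fun w => Rmin (X w ^ 2) (s ^ 2)) 0 (s^2)) as [r [h1 h2]].
  apply Hmin; auto. intros w. split. apply Rmin_glb; apply pow2_ge_0. apply Rmin_r.
  unfold lfun. rewrite h1. simpl. auto.
Qed.

Lemma lfun_Eub {Om} (Sp : SLESpace Om) X s : H Sp X -> Eub Sp (fun w => Rmin (X w ^ 2) (s ^ 2)) (lfun Sp X s).
Proof. intros hX. unfold Eub. rewrite (proj1 (lfun_spec Sp X s hX)). simpl; lra. Qed.

Lemma lfun_mono {Om} (Sp : SLESpace Om) X s t : H Sp X -> 0 <= s <= t -> lfun Sp X s <= lfun Sp X t.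
Proof.
  intros hX hst. destruct (lfun_spec Sp X s hX) as [e1 _]. destruct (lfun_spec Sp X t hX) as [e2 _].
  pose proof (E_mono Om Sp _ _ (Hmin Sp X s hX) (Hmin Sp X t hX)) as hm.
  rewrite e1, e2 in hm. apply hm. intros w.
  assert (s^2 <= t^2) by (apply pow_incr; lra).
  unfold Rmin; repeat destruct Rle_dec; lra.
Qed.

Lemma Htail {Om} (Sp : SLESpace Om) X z : H Sp X -> H Sp (fun w => Rmax (Rabs (X w) - z) 0).
Proof.
  intros hX. apply H1lip with (phi := fun a => Rmax (Rabs a - z) 0) (C := 1); auto. lra.
  intros a b. unfold Rmax, Rabs; repeat destruct Rle_dec; repeat destruct Rcase_abs; lra.
Qed.

Lemma Hrcl {Om} (Sp : SLESpace Om) X z : H Sp X -> 0 < z -> H Sp (fun w => rcl (X w / z)).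
Proof.
  intros hX hz. apply H1lip with (phi := fun a => rcl (a / z)) (C := 2 / z); auto.
  apply Rlt_le, Rdiv_lt_0_compat; lra.
  intros a b. eapply Rle_trans. apply rcl_lip.
  replace (a / z - b / z) with ((a - b) * / z) by (field; lra).
  rewrite Rabs_mult, Rabs_inv, (Rabs_pos_eq z) by lra. unfold Rdiv. lra.
Qed.

Lemma div_tail v z : 0 < z -> Rmax (Rabs (v / z) - 1) 0 = Rmax (Rabs v - z) 0 / z.
Proof.
  intros hz. unfold Rdiv. rewrite Rabs_mult, Rabs_inv, (Rabs_pos_eq z) by lra.
  replace (Rabs v * / z - 1) with ((Rabs v - z) * / z) by (field; lra).
  unfold Rmax. pose proof (Rinv_0_lt_compat z hz).
  repeat destruct Rle_dec; nra.
Qed.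

Lemma div_min v z : 0 < z -> Rmin ((v / z) ^ 2) 1 = Rmin (v ^ 2) (z ^ 2) / z ^ 2.
Proof.
  intros hz. assert (0 < z^2) by (apply pow_lt; lra).
  replace ((v/z)^2) with (v^2 / z^2) by (field; lra).
  unfold Rmin. repeat destruct Rle_dec.
  - auto.
  - exfalso. apply n. assert (v^2 = v^2/z^2 * z^2) by (field; lra). nra.
  - exfalso. apply n. assert (v^2 = v^2/z^2 * z^2) by (field; lra).
    apply Rmult_le_reg_r with (z^2); auto. nra.
  - field; lra.
Qed.

Lemma lip_exp_g (g : R -> R) T K : (forall a, g a <= T) ->
  (forall a b, Rabs (g a - g b) <= K * Rabs (a - b)) ->
  forall a b, Rabs (exp (g a) - exp (g b)) <= exp T * K * Rabs (a - b).
Proof.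
  intros hT hK a b. eapply Rle_trans. apply exp_lip; auto. rewrite Rmult_assoc.
  apply Rmult_le_compat_l. pose proof (exp_pos T); lra. auto.
Qed.

Lemma lip_h t z : 0 < z -> 0 <= t -> forall a b, Rabs (t * hcl (a / z) - t * hcl (b / z)) <= t / z * Rabs (a - b).
Proof.
  intros hz ht a b. rewrite <- Rmult_minus_distr_l, Rabs_mult, Rabs_pos_eq by lra.
  eapply Rle_trans. apply Rmult_le_compat_l. lra. apply hcl_lip.
  replace (a / z - b / z) with ((a - b) * / z) by (field; lra).
  rewrite Rabs_mult, Rabs_inv, (Rabs_pos_eq z) by lra. unfold Rdiv. lra.
Qed.

Lemma lip_r s z : 0 < z -> 0 <= s -> forall a b, Rabs (s * rcl (a / z) - s * rcl (b / z)) <= 2 * s / z * Rabs (a - b).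
Proof.
  intros hz ht a b. rewrite <- Rmult_minus_distr_l, Rabs_mult, Rabs_pos_eq by lra.
  eapply Rle_trans. apply Rmult_le_compat_l. lra. apply rcl_lip.
  replace (a / z - b / z) with ((a - b) * / z) by (field; lra).
  rewrite Rabs_mult, Rabs_inv, (Rabs_pos_eq z) by lra. unfold Rdiv. lra.
Qed.

Lemma Hexp {Om} (Sp : SLESpace Om) X (g : R -> R) T K : H Sp X -> 0 <= K -> (forall a, g a <= T) ->
  (forall a b, Rabs (g a - g b) <= K * Rabs (a - b)) -> H Sp (fun w => exp (g (X w))).
Proof.
  intros hX hK hT hl. apply H1lip with (phi := fun a => exp (g a)) (C := exp T * K); auto.
  apply Rmult_le_pos; auto. pose proof (exp_pos T); lra.
  apply lip_exp_g; auto.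
Qed.

Lemma c2_bound {Om} (Sp : SLESpace Om) X z t T : H Sp X -> E Sp X = Finite 0 -> 0 < z -> 0 < t ->
  Eub Sp (fun w => Rmax (Rabs (X w) - z) 0) T ->
  Eub Sp (fun w => exp (t * hcl (X w / z))) (1 + (t / z) * T + (exp t * t ^ 2 / z ^ 2) * lfun Sp X z).
Proof.
  intros hX hE hz ht hT.
  assert (hz2 : 0 < z^2) by (apply pow_lt; lra).
  assert (hc : 0 < exp t * t ^ 2 / z ^ 2).
  { apply Rdiv_lt_0_compat; auto. apply Rmult_lt_0_compat. apply exp_pos. apply pow_lt; lra. }
  assert (htz : 0 < t / z) by (apply Rdiv_lt_0_compat; lra).
  apply Eub_mono with (fun w => ((1 + (t/z) * X w) + (t/z) * Rmax (Rabs (X w) - z) 0)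
                                 + (exp t * t ^ 2 / z ^ 2) * Rmin (X w ^ 2) (z ^ 2)).
  - apply (Hexp Sp X (fun a => t * hcl (a / z)) t (t / z)). auto. lra.
    intros a. pose proof (hcl_bnd (a/z)). rewrite <- (Rmult_1_r t) at 2. apply Rmult_le_compat_l; lra.
    apply lip_h; lra.
  - apply H_add. apply H_add. apply H_add. apply Hcst. apply H_scal; auto.
    apply H_scal, Htail; auto. apply H_scal, Hmin; auto.
  - intros w. set (v := X w). pose proof (hcl_bnd (v/z)).
    eapply Rle_trans. apply exp_quad with (t := t). lra. nra.
    pose proof (hcl_le (v / z)) as q1. rewrite div_tail in q1 by lra.
    pose proof (hcl_sq (v / z)) as q2. rewrite div_min in q2 by lra.
    assert (t * hcl (v/z) <= t/z * v + t/z * Rmax (Rabs v - z) 0).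
    { replace (t/z*v + t/z*Rmax (Rabs v - z) 0) with (t * (v/z + Rmax (Rabs v - z) 0 / z)) by (field; lra).
      apply Rmult_le_compat_l; lra. }
    assert (exp t * (t * hcl (v / z)) ^ 2 <= exp t * t ^ 2 / z ^ 2 * Rmin (v ^ 2) (z ^ 2)).
    { replace (exp t * t ^ 2 / z ^ 2 * Rmin (v ^ 2) (z ^ 2)) with (exp t * t^2 * (Rmin (v ^ 2) (z ^ 2) / z^2)) by (field; lra).
      rewrite Rpow_mult_distr, <- Rmult_assoc. apply Rmult_le_compat_l; auto.
      apply Rmult_le_pos. pose proof (exp_pos t); lra. apply pow2_ge_0. }
    lra.
  - apply Eub_add. apply H_add. apply H_add. apply Hcst. apply H_scal; auto.
    apply H_scal, Htail; auto. apply H_scal, Hmin; auto.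
    replace (1 + t / z * T) with ((1 + t/z * 0) + t/z * T) by ring.
    apply Eub_add. apply H_add. apply Hcst. apply H_scal; auto. apply H_scal, Htail; auto.
    apply Eub_add. apply Hcst. apply H_scal; auto. apply Eub_const.
    apply Eub_scal; auto. unfold Eub; rewrite hE; simpl; lra.
    apply Eub_scal; auto. apply Htail; auto.
    apply Eub_scal; auto. apply Hmin; auto. apply lfun_Eub; auto.
Qed.

Lemma c1_bound {Om} (Sp : SLESpace Om) X z s V : H Sp X -> 0 < z -> 0 < s ->
  Eub Sp (fun w => rcl (X w / z)) V ->
  Eub Sp (fun w => exp (s * rcl (X w / z))) (1 + s * exp s * V).
Proof.
  intros hX hz hs hV.
  assert (0 < s * exp s) by (apply Rmult_lt_0_compat; auto; apply exp_pos).
  apply Eub_mono with (fun w => 1 + s * exp s * rcl (X w / z)).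
  - apply (Hexp Sp X (fun a => s * rcl (a / z)) s (2 * s / z)). auto. apply Rlt_le, Rdiv_lt_0_compat; lra.
    intros a. pose proof (rcl_bnd (a/z)). rewrite <- (Rmult_1_r s) at 2. apply Rmult_le_compat_l; lra. apply lip_r; lra.
  - apply H_add. apply Hcst. apply H_scal, Hrcl; auto.
  - intros w. apply exp_lin. lra. apply rcl_bnd.
  - apply Eub_add. apply Hcst. apply H_scal, Hrcl; auto. apply Eub_const.
    apply Eub_scal; auto. apply Hrcl; auto.
Qed.

Lemma r_bound {Om} (Sp : SLESpace Om) X z eta : H Sp X -> 0 < z -> 0 <= eta ->
  Rbar_le (Vcap Sp (fun w => z / 2 <= Rabs (X w))) (Finite (eta * (lfun Sp X (z/2) / (z/2) ^ 2))) ->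
  Eub Sp (fun w => rcl (X w / z)) (4 * eta * lfun Sp X z / z ^ 2).
Proof.
  intros hX hz he hV. unfold Eub.
  eapply Rbar_le_trans. apply Vcap_lb with (A := fun w => z / 2 <= Rabs (X w)).
  apply Hrcl; auto. intros; apply rcl_bnd.
  intros w hw. apply rcl_pos in hw. unfold Rdiv in hw. rewrite Rabs_mult, Rabs_inv, (Rabs_pos_eq z) in hw by lra.
  apply Rlt_le. apply Rmult_lt_reg_r with (/ z). apply Rinv_0_lt_compat; lra.
  replace (z / 2 * / z) with (1/2) by (field; lra). lra.
  eapply Rbar_le_trans. apply hV. cbn [Rbar_le].
  pose proof (lfun_mono Sp X (z/2) z hX ltac:(lra)).
  replace (eta * (lfun Sp X (z / 2) / (z / 2) ^ 2)) with (4 * eta * lfun Sp X (z/2) / z^2) by (field; lra).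
  set (L1 := lfun Sp X (z/2)) in *. set (L2 := lfun Sp X z) in *.
  unfold Rdiv. apply Rmult_le_compat_r. apply Rlt_le, Rinv_0_lt_compat, pow_lt; lra.
  apply Rmult_le_compat_l; lra.
Qed.

Lemma tail_step {Om} (Sp : SLESpace Om) X z rho tau : H Sp X -> 0 < z ->
  Eub Sp (fun w => rcl (X w / z)) rho -> Eub Sp (fun w => Rmax (Rabs (X w) - 2 * z) 0) tau ->
  Eub Sp (fun w => Rmax (Rabs (X w) - z) 0) (z * rho + tau).
Proof.
  intros hX hz hr ht.
  apply Eub_mono with (fun w => z * rcl (X w / z) + Rmax (Rabs (X w) - 2 * z) 0).
  apply Htail; auto. apply H_add. apply H_scal, Hrcl; auto. apply Htail; auto.
  - intros w. set (v := X w).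
    assert (Rabs (v / z) = Rabs v / z) by (unfold Rdiv; rewrite Rabs_mult, Rabs_inv, (Rabs_pos_eq z) by lra; auto).
    destruct (Rle_dec (Rabs v) z).
    + assert (Rmax (Rabs v - z) 0 = 0) by (unfold Rmax; destruct Rle_dec; lra).
      rewrite H0. pose proof (rcl_bnd (v/z)).
      assert (0 <= Rmax (Rabs v - 2 * z) 0) by apply Rmax_r. nra.
    + rewrite rcl_one. 2:{ rewrite H. apply Rmult_le_reg_r with z; auto. field_simplify; lra. }
      unfold Rmax; repeat destruct Rle_dec; lra.
  - apply Eub_add. apply H_scal, Hrcl; auto. apply Htail; auto. apply Eub_scal; auto. apply Hrcl; auto. auto.
Qed.

Lemma dbl {Om} (Sp : SLESpace Om) X z rho : H Sp X -> 0 < z ->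
  Eub Sp (fun w => rcl (X w / z)) rho -> lfun Sp X (2 * z) <= lfun Sp X z + 3 * z ^ 2 * rho.
Proof.
  intros hX hz hr.
  assert (h3 : 0 < 3 * z^2) by (apply Rmult_lt_0_compat; [lra| apply pow_lt; lra]).
  assert (Eub Sp (fun w => Rmin (X w ^ 2) ((2 * z) ^ 2)) (lfun Sp X z + 3 * z ^ 2 * rho)).
  { apply Eub_mono with (fun w => Rmin (X w ^ 2) (z ^ 2) + 3 * z ^ 2 * rcl (X w / z)).
    apply Hmin; auto. apply H_add. apply Hmin; auto. apply H_scal, Hrcl; auto.
    - intros w. set (v := X w).
      assert (Rabs (v / z) = Rabs v / z) by (unfold Rdiv; rewrite Rabs_mult, Rabs_inv, (Rabs_pos_eq z) by lra; auto).
      destruct (Rle_dec (Rabs v) z).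
      + assert (v ^ 2 <= z ^ 2).
        { rewrite <- (pow2_abs v). apply pow_incr. split; auto. apply Rabs_pos. }
        assert (v ^ 2 <= (2*z) ^ 2) by nra.
        unfold Rmin at 1 2. repeat destruct Rle_dec; try lra.
        pose proof (rcl_bnd (v/z)). nra.
      + rewrite rcl_one. 2:{ rewrite H. apply Rmult_le_reg_r with z; auto. field_simplify; lra. }
        assert (z ^ 2 <= v ^ 2).
        { rewrite <- (pow2_abs v). apply pow_incr. split; lra. }
        unfold Rmin; repeat destruct Rle_dec; nra.
    - apply Eub_add. apply Hmin; auto. apply H_scal, Hrcl; auto. apply lfun_Eub; auto.
      apply Eub_scal; auto. apply Hrcl; auto. }
  unfold Eub in H. rewrite (proj1 (lfun_spec Sp X (2*z) hX)) in H. simpl in H. auto.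
Qed.

Lemma tail_ind {Om} (Sp : SLESpace Om) X eta M : H Sp X -> 0 <= eta <= 1/24 ->
  (forall y, M <= y -> Rbar_le (Vcap Sp (fun w => y <= Rabs (X w))) (Finite (eta * (lfun Sp X y / y ^ 2)))) ->
  forall K z tau, 0 < z -> M <= z / 2 ->
  Eub Sp (fun w => Rmax (Rabs (X w) - 2 ^ K * z) 0) tau ->
  Eub Sp (fun w => Rmax (Rabs (X w) - z) 0) (16 * eta * lfun Sp X z / z + tau).
Proof.
  intros hX he hI K. induction K; intros z tau hz hM ht.
  - simpl in ht. rewrite Rmult_1_l in ht. apply Eub_weak with tau; auto.
    pose proof (proj2 (lfun_spec Sp X z hX)).
    assert (0 <= 16 * eta * lfun Sp X z / z). apply Rdiv_le_0_compat; try lra.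
    apply Rmult_le_pos; lra. lra.
  - assert (e2 : 2 ^ S K * z = 2 ^ K * (2 * z)) by (simpl; ring).
    rewrite e2 in ht. apply IHK in ht; [|lra|lra].
    assert (hr : Eub Sp (fun w => rcl (X w / z)) (4 * eta * lfun Sp X z / z ^ 2)).
    { apply r_bound; auto; try lra; apply hI; auto. }
    pose proof (tail_step Sp X z _ _ hX hz hr ht) as hs.
    pose proof (dbl Sp X z _ hX hz hr) as hd.
    apply Eub_weak with (1 := hs).
    pose proof (proj2 (lfun_spec Sp X z hX)).
    set (l1 := lfun Sp X z) in *. set (l2 := lfun Sp X (2 * z)) in *.
    assert (q1 : z * (4 * eta * l1 / z ^ 2) = 4 * eta * l1 / z) by (field; lra).
    assert (q2 : 3 * z ^ 2 * (4 * eta * l1 / z ^ 2) = 12 * eta * l1) by (field; lra).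
    rewrite q2 in hd.
    assert (16 * eta * l2 / (2 * z) <= 12 * eta * l1 / z).
    { apply Rmult_le_reg_r with (2 * z). lra.
      replace (16 * eta * l2 / (2 * z) * (2 * z)) with (16 * eta * l2) by (field; lra).
      replace (12 * eta * l1 / z * (2 * z)) with (24 * eta * l1) by (field; lra).
      assert (eta * l2 <= eta * (l1 + 12 * eta * l1)) by (apply Rmult_le_compat_l; lra).
      assert (eta * eta * l1 <= eta * (1/24) * l1) by (apply Rmult_le_compat_r; [lra|]; apply Rmult_le_compat_l; lra).
      nra. }
    assert (4 * eta * l1 / z + 12 * eta * l1 / z = 16 * eta * l1 / z) by (field; lra).
    lra.
Qed.

Lemma INR_le_pow2 K : INR K <= 2 ^ K.
Proof. induction K. simpl; lra. rewrite S_INR. simpl. assert (1 <= 2 ^ K) by (apply pow_R1_Rle; lra). lra. Qed.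

Lemma tail_final {Om} (Sp : SLESpace Om) X eta M z : H Sp X -> 0 < eta <= 1/24 ->
  (forall y, M <= y -> Rbar_le (Vcap Sp (fun w => y <= Rabs (X w))) (Finite (eta * (lfun Sp X y / y ^ 2)))) ->
  (forall eps, 0 < eps -> exists M, forall c, M <= c ->
     Rbar_le (E Sp (fun w => Rmax (Rabs (X w) - c) 0)) (Finite eps)) ->
  0 < z -> M <= z / 2 -> 0 < lfun Sp X z ->
  Eub Sp (fun w => Rmax (Rabs (X w) - z) 0) (17 * eta * lfun Sp X z / z).
Proof.
  intros hX he hI hIII hz hM hl.
  assert (hep : 0 < eta * lfun Sp X z / z) by (apply Rdiv_lt_0_compat; auto; apply Rmult_lt_0_compat; lra).
  destruct (hIII _ hep) as [M3 hM3].
  destruct (archimed (M3 / z)) as [hk _].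
  destruct (Rle_lt_dec (IZR (up (M3 / z))) 0) as [hneg|hpos].
  -
    assert (M3 <= 2 ^ 0 * z).
    { simpl. assert (M3 / z < 0 + 1) by lra.
      assert (M3 < z). { apply Rmult_lt_reg_r with (/ z). apply Rinv_0_lt_compat; lra.
        rewrite Rinv_r by lra. unfold Rdiv in *. lra. } lra. }
    pose proof (tail_ind Sp X eta M hX ltac:(lra) hI 0 z _ hz hM (hM3 _ H)) as hti.
    eapply Eub_weak. apply hti. assert (16 * eta * lfun Sp X z / z + eta * lfun Sp X z / z = 17 * eta * lfun Sp X z / z) by (field; lra). lra.
  - set (K := Z.to_nat (up (M3 / z))).
    assert (INR K = IZR (up (M3 / z))).
    { unfold K. rewrite INR_IZR_INZ. rewrite Z2Nat.id; auto. apply le_IZR; lra. }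
    assert (M3 <= 2 ^ K * z).
    { pose proof (INR_le_pow2 K).
      assert (M3 / z <= 2 ^ K) by lra.
      apply Rmult_le_reg_r with (/ z). apply Rinv_0_lt_compat; lra.
      rewrite Rmult_assoc, Rinv_r by lra. unfold Rdiv in *. lra. }
    pose proof (tail_ind Sp X eta M hX ltac:(lra) hI K z _ hz hM (hM3 _ H0)) as hti.
    eapply Eub_weak. apply hti. assert (16 * eta * lfun Sp X z / z + eta * lfun Sp X z / z = 17 * eta * lfun Sp X z / z) by (field; lra). lra.
Qed.

Lemma glb_fin (P : R -> Prop) m s0 : (forall s, P s -> m <= s) -> P s0 ->
  exists g, Glb_Rbar P = Finite g /\ m <= g /\ (forall s, P s -> g <= s) /\
            (forall y, g < y -> exists s, P s /\ s < y).
Proof.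
  intros hm hs0. destruct (Glb_Rbar_correct P) as [hlb hglb].
  assert (h1 : Rbar_le (Finite m) (Glb_Rbar P)) by (apply hglb; intros x hx; simpl; auto).
  assert (h2 : Rbar_le (Glb_Rbar P) (Finite s0)) by (apply hlb; auto).
  destruct (Glb_Rbar P) as [g| |] eqn:eg; simpl in h1, h2; try contradiction.
  exists g. split; auto. split; auto. split.
  - intros s hs. specialize (hlb s hs). simpl in hlb. auto.
  - intros y hy. destruct (classic (exists s, P s /\ s < y)) as [h|h]; auto.
    exfalso. assert (Rbar_le (Finite y) (Finite g)).
    { apply hglb. intros x hx. simpl. destruct (Rle_lt_dec y x); auto. exfalso; apply h; eauto. }
    simpl in H. lra.
Qed.

Lemma low_le {Om} (Sp : SLESpace Om) X s lo : H Sp X ->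
  Elow Sp (fun w => Rmin (X w ^ 2) (s ^ 2)) = Finite lo -> lo <= lfun Sp X s.
Proof.
  intros hX he. unfold Elow in he.
  destruct (E Sp (fun w => - Rmin (X w ^ 2) (s ^ 2))) as [r| |] eqn:er; simpl in he; try discriminate.
  injection he; intros; subst lo.
  assert (hH : H Sp (fun w => - Rmin (X w ^ 2) (s ^ 2))).
  { replace (fun w => - Rmin (X w ^ 2) (s ^ 2)) with (fun w => -1 * Rmin (X w ^ 2) (s ^ 2))
      by (apply functional_extensionality; intros; ring).
    apply H_scal, Hmin; auto. }
  destruct (lfun_spec Sp X s hX) as [e1 _].
  pose proof (E_subadd Om Sp _ _ (Hmin Sp X s hX) hH) as hs.
  rewrite e1, er in hs. specialize (hs I).
  replace (fun w => Rmin (X w ^ 2) (s ^ 2) + - Rmin (X w ^ 2) (s ^ 2)) with (fun _ : Om => 0) in hs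
    by (apply functional_extensionality; intros; ring).
  rewrite E_const in hs. simpl in hs. lra.
Qed.

Lemma b0_spec {Om} (Sp : SLESpace Om) X : H Sp X ->
  (exists K M, forall y, M <= y ->
     exists lo, Elow Sp (fun w => Rmin (X w ^ 2) (y ^ 2)) = Finite lo /\ 0 < lo /\
       lfun Sp X y / lo <= K) ->
  0 <= b0 Sp X /\ 0 < lfun Sp X (b0 Sp X + 1).
Proof.
  intros hX [K [M hII]].
  destruct (hII (Rmax M 0) (Rmax_l _ _)) as [lo [h1 [h2 _]]].
  pose proof (low_le Sp X _ lo hX h1).
  destruct (glb_fin (fun x => 0 <= x /\ 0 < lfun Sp X x) 0 (Rmax M 0)) as [g [eg [hg1 [hg2 hg3]]]].
  intros s [hs _]; auto. split. apply Rmax_r. lra.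
  unfold b0. rewrite eg. simpl. split; auto.
  destruct (hg3 (g + 1) ltac:(lra)) as [s [[hs1 hs2] hs3]].
  pose proof (lfun_mono Sp X s (g+1) hX ltac:(lra)). lra.
Qed.

Lemma zn_spec {Om} (Sp : SLESpace Om) X (q A1 : R) : H Sp X -> 0 < q -> 0 < A1 ->
  0 <= b0 Sp X -> lfun Sp X (b0 Sp X + 1) > q * (b0 Sp X + 1) ^ 2 ->
  (forall s, 0 <= s -> lfun Sp X s <= s * A1) ->
  let z := real (Glb_Rbar (fun s => b0 Sp X + 1 <= s /\ lfun Sp X s / s ^ 2 <= q)) in
  b0 Sp X + 1 <= z /\ lfun Sp X z = q * z ^ 2.
Proof.
  intros hX hq hA hb0 hbq hA1 z.
  set (b := b0 Sp X) in *.
  assert (iff1 : forall s, 0 < s -> (lfun Sp X s / s ^ 2 <= q <-> lfun Sp X s <= q * s ^ 2)).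
  { intros s hs. assert (0 < s^2) by (apply pow_lt; lra). split; intros h.
    - apply Rmult_le_reg_r with (/ s^2). apply Rinv_0_lt_compat; auto.
      replace (q * s^2 * / s^2) with q by (field; lra). auto.
    - apply Rmult_le_reg_r with (s^2); auto. replace (lfun Sp X s / s^2 * s^2) with (lfun Sp X s) by (field; lra). auto. }
  set (s0 := Rmax (b + 1) (A1 / q)).
  assert (hs0 : b + 1 <= s0 /\ lfun Sp X s0 / s0 ^ 2 <= q).
  { assert (b+1 <= s0) by apply Rmax_l. assert (A1 / q <= s0) by apply Rmax_r.
    split; auto. apply iff1. lra. pose proof (hA1 s0 ltac:(lra)).
    assert (A1 <= q * s0).
    { apply Rmult_le_reg_r with (/ q). apply Rinv_0_lt_compat; auto.
      replace (q * s0 * / q) with s0 by (field; lra). unfold Rdiv in H0; lra. }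
    assert (s0 * A1 <= s0 * (q * s0)) by (apply Rmult_le_compat_l; lra). nra. }
  destruct (glb_fin _ (b + 1) s0 (fun s hs => proj1 hs) hs0) as [g [eg [hg1 [hg2 hg3]]]].
  unfold z. rewrite eg. simpl. split; auto.
  pose proof (proj2 (lfun_spec Sp X g hX)) as hlg.
  destruct (Rtotal_order (lfun Sp X g) (q * g ^ 2)) as [hlt | [heq | hgt]]; auto; exfalso.
  -
    assert (hbg : b + 1 < g).
    { destruct hg1 as [h|h]; auto. rewrite <- h in hlt. lra. }
    set (y1 := sqrt (lfun Sp X g / q)).
    assert (hy1 : 0 <= y1) by apply sqrt_pos.
    assert (hy1sq : y1 * y1 = lfun Sp X g / q) by (apply sqrt_sqrt; apply Rdiv_le_0_compat; lra).
    assert (hy1g : y1 < g).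
    { destruct (Rlt_le_dec y1 g); auto. exfalso.
      assert (g * g <= y1 * y1) by nra. rewrite hy1sq in H.
      assert (q * (g * g) <= lfun Sp X g).
      { apply Rmult_le_reg_r with (/ q). apply Rinv_0_lt_compat; auto.
        replace (q * (g * g) * / q) with (g * g) by (field; lra). unfold Rdiv in H; lra. }
      simpl in hlt. lra. }
    set (s := (g + Rmax (b + 1) y1) / 2).
    assert (Rmax (b+1) y1 < g) by (unfold Rmax; destruct Rle_dec; lra).
    assert (b + 1 <= Rmax (b+1) y1) by apply Rmax_l. assert (y1 <= Rmax (b+1) y1) by apply Rmax_r.
    assert (hsg : s < g) by (unfold s; lra).
    assert (hs1 : b + 1 <= s) by (unfold s; lra).
    assert (hsy : y1 < s) by (unfold s; lra).
    assert (lfun Sp X s <= lfun Sp X g) by (apply lfun_mono; auto; lra).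
    assert (lfun Sp X g = q * (y1 * y1)) by (rewrite hy1sq; field; lra).
    assert (y1 * y1 < s * s) by nra.
    assert (lfun Sp X s <= q * s ^ 2) by (simpl; nra).
    assert (g <= s). { apply hg2. split; auto. apply iff1; auto. lra. }
    lra.
  -
    set (y := sqrt (lfun Sp X g / q)).
    assert (hy : 0 <= y) by apply sqrt_pos.
    assert (hysq : y * y = lfun Sp X g / q) by (apply sqrt_sqrt; apply Rdiv_le_0_compat; lra).
    assert (hgp : 0 < g) by lra.
    assert (hyg : g < y).
    { destruct (Rlt_le_dec g y); auto. exfalso.
      assert (y * y <= g * g) by nra. rewrite hysq in H.
      assert (lfun Sp X g <= q * (g * g)).
      { apply Rmult_le_reg_r with (/ q). apply Rinv_0_lt_compat; auto.
        replace (q * (g * g) * / q) with (g * g) by (field; lra). unfold Rdiv in H; lra. }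
      simpl in hgt. lra. }
    destruct (hg3 y hyg) as [s [[hs1 hs2] hs3]].
    assert (g <= s) by (apply hg2; split; auto).
    apply iff1 in hs2; [|lra].
    assert (lfun Sp X g <= lfun Sp X s) by (apply lfun_mono; auto; lra).
    assert (lfun Sp X g = q * (y * y)) by (rewrite hysq; field; lra).
    assert (s * s < y * y) by nra.
    simpl in hs2. nra.
Qed.

Lemma sum1_le f g n : (forall i, f i <= g i) -> sum1 f n <= sum1 g n.
Proof. intros h. induction n; simpl. lra. pose proof (h (S n)). lra. Qed.

Lemma sum1_plus f g n : sum1 (fun i => f i + g i) n = sum1 f n + sum1 g n.
Proof. induction n; simpl. lra. rewrite IHn. ring. Qed.

Lemma sum1_scal c f n : sum1 (fun i => c * f i) n = c * sum1 f n.
Proof. induction n; simpl. lra. rewrite IHn. ring. Qed.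

Lemma sum1_nonneg f n : (forall i, 0 <= f i) -> 0 <= sum1 f n.
Proof. intros h. induction n; simpl. lra. pose proof (h (S n)). lra. Qed.

Lemma det (a : nat -> R) n x z : 0 < x -> 0 < z ->
  sum1 a n >= x * sqrt (sum1 (fun i => a i ^ 2) n) ->
  sum1 (fun i => a i ^ 2) n >= 9 * x ^ 2 * z ^ 2 ->
  sum1 (fun i => rcl (a i / z)) n >= / 10000 * x ^ 2 \/
  sum1 (fun i => hcl (a i / z)) n >= 29699 / 10000 * x ^ 2.
Proof.
  intros hx hz hS hV.
  set (Q := sum1 (fun i => a i ^ 2) n) in *.
  set (S := sqrt Q) in *.
  assert (hQ : 0 <= Q) by (apply sum1_nonneg; intros; apply pow2_ge_0).
  assert (hS0 : 0 <= S) by apply sqrt_pos.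
  assert (hSS : S * S = Q) by (apply sqrt_sqrt; auto).
  assert (h3 : 3 * x * z <= S).
  { destruct (Rle_lt_dec (3 * x * z) S); auto. exfalso.
    assert (S * S < (3*x*z) * (3*x*z)) by nra. simpl in hV. nra. }
  assert (hSp : 0 < S) by (assert (0 < x * z) by nra; lra).
  set (sg := S / z).
  assert (hsg : 3 * x <= sg).
  { unfold sg. apply Rmult_le_reg_r with z; auto. replace (S / z * z) with S by (field; lra). lra. }
  set (R0 := sum1 (fun i => rcl (a i / z)) n).
  set (Hs := sum1 (fun i => hcl (a i / z)) n).
  destruct (Rlt_le_dec R0 (/ 10000 * x ^ 2)) as [hR|hR]; [right|left; lra].
  set (c := 100 * sg / x).
  assert (hc : 0 < c) by (unfold c; apply Rdiv_lt_0_compat; nra).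
  assert (hsum : sum1 (fun i => / z * a i) n <=
     sum1 (fun i => hcl (a i / z) + (1 + c/2) * rcl (a i / z) + / (2 * c * z ^ 2) * a i ^ 2) n).
  { apply sum1_le. intros i. pose proof (pointwise (a i / z) c hc).
    replace (/ z * a i) with (a i / z) by (field; lra).
    replace (/ (2 * c * z ^ 2) * a i ^ 2) with ((a i / z) ^ 2 / (2 * c)) by (field; repeat split; lra).
    lra. }
  rewrite sum1_scal, !sum1_plus, !sum1_scal in hsum. fold Q R0 Hs in hsum.
  assert (e1 : / (2 * c * z ^ 2) * Q = x * sg / 200).
  { rewrite <- hSS. unfold c, sg. field. repeat split; lra. }
  assert (e2 : / z * sum1 a n >= x * sg).
  { unfold sg. apply Rle_ge. apply Rmult_le_reg_r with z; auto.
    replace (/ z * sum1 a n * z) with (sum1 a n) by (field; lra).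
    replace (x * (S / z) * z) with (x * S) by (field; lra). fold S in hS. lra. }
  assert (e3 : c / 2 * R0 <= x * sg / 200).
  { assert (c/2 * R0 <= c/2 * (/10000 * x^2)) by (apply Rmult_le_compat_l; lra).
    replace (c / 2 * (/ 10000 * x ^ 2)) with (x * sg / 200) in H by (unfold c; field; lra). lra. }
  assert (e4 : 0 <= R0) by (apply sum1_nonneg; intros; apply rcl_bnd).
  assert (Hs >= x * sg * (99/100) - R0) by nra.
  assert (x * sg >= 3 * x ^ 2) by (simpl; nra).
  lra.
Qed.

Lemma A1_bound {Om} (Sp : SLESpace Om) X : H Sp X ->
  (forall eps, 0 < eps -> exists M, forall c, M <= c ->
     Rbar_le (E Sp (fun w => Rmax (Rabs (X w) - c) 0)) (Finite eps)) ->
  exists A1, 0 < A1 /\ forall s, 0 <= s -> lfun Sp X s <= s * A1.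
Proof.
  intros hX hIII. destruct (hIII 1 ltac:(lra)) as [M1 hM1].
  set (c1 := Rmax M1 0). assert (M1 <= c1) by apply Rmax_l. assert (0 <= c1) by apply Rmax_r.
  exists (1 + c1). split. lra. intros s hs.
  destruct hs as [hs|hs].
  - assert (hE1 : Eub Sp (fun w => Rmin (X w ^ 2) (s ^ 2)) (s * 1 + s * c1)).
    { apply Eub_mono with (fun w => s * Rmax (Rabs (X w) - c1) 0 + s * c1).
      apply Hmin; auto. apply H_add. apply H_scal, Htail; auto. apply Hcst.
      - intros w. set (v := X w).
        assert (Rmin (v^2) (s^2) <= s * Rabs v).
        { rewrite <- (pow2_abs v). pose proof (Rabs_pos v). unfold Rmin; destruct Rle_dec; simpl in *; nra. }
        assert (Rabs v <= Rmax (Rabs v - c1) 0 + c1) by (unfold Rmax; destruct Rle_dec; lra).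
        assert (s * Rabs v <= s * (Rmax (Rabs v - c1) 0 + c1)) by (apply Rmult_le_compat_l; lra).
        lra.
      - apply Eub_add. apply H_scal, Htail; auto. apply Hcst. apply Eub_scal; auto. apply Htail; auto.
        apply hM1; auto. apply Eub_const. }
    unfold Eub in hE1. rewrite (proj1 (lfun_spec Sp X s hX)) in hE1. simpl in hE1. lra.
  - subst s. pose proof (proj2 (lfun_spec Sp X 0 hX)) as hE1. simpl in hE1. lra.
Qed.

Lemma exp_half : exp (1/2) <= 7/4.
Proof.
  pose proof exp_le_3. assert (exp (1/2) * exp (1/2) = exp 1) by (rewrite <- exp_plus; f_equal; lra).
  pose proof (exp_pos (1/2)). nra.
Qed.

Theorem proposition4p1 (Omega : Type) (Sp : SLESpace Omega)
  (X : Omega -> R) (Xs : nat -> Omega -> R) (x : nat -> R) :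
  H Sp X ->
  (forall n, (1 <= n)%nat -> H Sp (Xs n)) ->
  indep_seq Sp Xs ->
  (forall n, (1 <= n)%nat -> same_dist Sp (Xs n) X) ->
  E Sp X = Finite 0 -> Elow Sp X = Finite 0 ->
  (forall eps, 0 < eps -> exists M, forall y, M <= y ->
     Rbar_le (Vcap Sp (fun w => y <= Rabs (X w)))
             (Finite (eps * (lfun Sp X y / y ^ 2)))) ->
  (exists K M, forall y, M <= y ->
     exists lo, Elow Sp (fun w => Rmin (X w ^ 2) (y ^ 2)) = Finite lo /\ 0 < lo /\
       lfun Sp X y / lo <= K) ->
  (forall eps, 0 < eps -> exists M, forall c, M <= c ->
     Rbar_le (E Sp (fun w => Rmax (Rabs (X w) - c) 0)) (Finite eps)) ->
  (forall A, exists N, forall n, (N <= n)%nat -> A <= x n) ->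
  (forall eps, 0 < eps -> exists N, forall n, (N <= n)%nat ->
     Rabs (x n) <= eps * sqrt (INR n)) ->
  forall eps, 0 < eps -> exists N, forall n, (N <= n)%nat ->
    Rbar_le
      (Vcap Sp (fun w =>
          sum1 (fun i => Xs i w) n >= x n * sqrt (sum1 (fun i => Xs i w ^ 2) n) /\
          sum1 (fun i => Xs i w ^ 2) n >= 9 * INR n * lfun Sp X (zn Sp X (x n) n)))
      (Finite (exp (- x n ^ 2 + eps * x n ^ 2))).
Proof.
  intros hX hXs hind hsd hE0 _ hI hII hIII hxinf hxo eps heps.
  set (s := 12000).
  set (t := 1/2).
  assert (hs : 0 < s) by (unfold s; lra). assert (ht : 0 < t) by (unfold t; lra).
  assert (hes : 1 <= exp s) by (pose proof (exp_le' 0 s ltac:(lra)); rewrite exp_0 in H; lra).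
  set (eta := / (40 * s * exp s)).
  assert (heta : 0 < eta) by (unfold eta; apply Rinv_0_lt_compat; nra).
  assert (heta2 : eta <= 1/1000).
  { unfold eta. apply Rmult_le_reg_r with (40 * s * exp s). nra.
    rewrite Rinv_l by nra. unfold s in *. nra. }
  destruct (hI eta heta) as [M hM].
  destruct (b0_spec Sp X hX hII) as [hb0 hlb].
  set (beta := b0 Sp X + 1) in *. set (lam0 := lfun Sp X beta) in *.
  destruct (A1_bound Sp X hX hIII) as [A1 [hA1 hA1b]].
  set (qmax := Rmin (lam0 / (2 * beta ^ 2)) (lam0 / (4 * M ^ 2 + 1))).
  assert (hbeta : 1 <= beta) by (unfold beta; lra).
  assert (hqmax : 0 < qmax).
  { unfold qmax, Rmin. destruct Rle_dec; apply Rdiv_lt_0_compat; auto.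
    pose proof (pow_lt beta 2 ltac:(lra)); lra. pose proof (pow2_ge_0 M); lra. }
  destruct (hxinf 10) as [N1 hN1].
  destruct (hxo (sqrt qmax) (sqrt_lt_R0 _ hqmax)) as [N2 hN2].
  exists (Nat.max 1 (Nat.max N1 N2)). intros n hn.
  specialize (hN1 n ltac:(lia)). specialize (hN2 n ltac:(lia)).
  set (xn := x n) in *.
  assert (hnpos : 0 < INR n) by (apply lt_0_INR; lia).
  set (q := xn ^ 2 / INR n).
  assert (hq : 0 < q) by (unfold q; apply Rdiv_lt_0_compat; auto; apply pow_lt; lra).
  assert (hqle : q <= qmax).
  { unfold q. apply Rmult_le_reg_r with (INR n); auto.
    replace (xn ^ 2 / INR n * INR n) with (xn ^ 2) by (field; lra).
    rewrite Rabs_pos_eq in hN2 by lra.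
    assert (xn ^ 2 <= (sqrt qmax * sqrt (INR n)) ^ 2) by (apply pow_incr; lra).
    rewrite Rpow_mult_distr in H. rewrite !pow2_sqrt in H by lra. lra. }
  assert (hq1 : q <= lam0 / (2 * beta ^ 2)) by (pose proof (Rmin_l (lam0 / (2 * beta ^ 2)) (lam0 / (4 * M ^ 2 + 1))); fold qmax in H; lra).
  assert (hq2 : q <= lam0 / (4 * M ^ 2 + 1)) by (pose proof (Rmin_r (lam0 / (2 * beta ^ 2)) (lam0 / (4 * M ^ 2 + 1))); fold qmax in H; lra).
  assert (hbq : lam0 > q * beta ^ 2).
  { assert (0 < beta ^ 2) by (apply pow_lt; lra).
    assert (q * beta ^ 2 <= lam0 / (2 * beta ^ 2) * beta ^ 2) by (apply Rmult_le_compat_r; lra).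
    replace (lam0 / (2 * beta ^ 2) * beta ^ 2) with (lam0 / 2) in H0 by (field; lra). lra. }
  pose proof (zn_spec Sp X q A1 hX hq hA1 hb0 hbq hA1b) as hz. cbv zeta in hz.
  fold q in hz.
  replace (real (Glb_Rbar (fun s0 : R => b0 Sp X + 1 <= s0 /\ lfun Sp X s0 / s0 ^ 2 <= q)))
    with (zn Sp X xn n) in hz by reflexivity.
  set (z := zn Sp X xn n) in *.
  destruct hz as [hzb hlz].
  assert (hz0 : 0 < z) by lra.
  assert (hlz0 : lam0 <= lfun Sp X z) by (apply lfun_mono; auto; unfold beta; lra).
  assert (hMz : M <= z / 2).
  { assert (z ^ 2 * q = lfun Sp X z) by lra.
    assert (lam0 <= z ^ 2 * q) by lra.
    assert (q * (4 * M ^ 2 + 1) <= lam0).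
    { apply Rmult_le_reg_r with (/ (4 * M^2 + 1)). apply Rinv_0_lt_compat; pose proof (pow2_ge_0 M); lra.
      replace (q * (4 * M ^ 2 + 1) * / (4 * M ^ 2 + 1)) with q by (field; pose proof (pow2_ge_0 M); lra).
      unfold Rdiv in hq2; lra. }
    assert (4 * M ^ 2 + 1 <= z ^ 2) by nra.
    destruct (Rle_lt_dec M (z/2)); auto.
    assert (z/2 * (z/2) < M * M) by (apply Rmult_le_0_lt_compat; lra).
    replace (M ^ 2) with (M * M) in H2 by ring. replace (z ^ 2) with (z * z) in H2 by ring. lra. }
  assert (hlzp : 0 < lfun Sp X z) by lra.
  assert (hr : Eub Sp (fun w => rcl (X w / z)) (4 * eta * q)).
  { apply Eub_weak with (4 * eta * lfun Sp X z / z ^ 2).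
    apply r_bound; auto; try lra; apply hM; auto.
    rewrite hlz. right. field. lra. }
  assert (hT : Eub Sp (fun w => Rmax (Rabs (X w) - z) 0) (17 * eta * lfun Sp X z / z)).
  { apply tail_final with M; auto. lra. }
  pose proof (c2_bound Sp X z t _ hX hE0 hz0 ht hT) as hc2.
  pose proof (c1_bound Sp X z s _ hX hz0 hs hr) as hc1.
  set (f1 := fun v => exp (s * rcl (v / z))).
  set (f2 := fun v => exp (t * hcl (v / z))).
  assert (hf1b : forall y, 1 <= f1 y <= exp s).
  { intros y. unfold f1. pose proof (rcl_bnd (y / z)). split.
    rewrite <- exp_0. apply exp_le'. nra. apply exp_le'. nra. }
  assert (hf2b : forall y, exp (- t) <= f2 y <= exp t).
  { intros y. unfold f2. pose proof (hcl_bnd (y / z)). split; apply exp_le'; nra. }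
  assert (hf1l : forall a b, Rabs (f1 a - f1 b) <= exp s * (2 * s / z) * Rabs (a - b)).
  { apply lip_exp_g. intros a. pose proof (rcl_bnd (a / z)). nra. apply lip_r; lra. }
  assert (hf2l : forall a b, Rabs (f2 a - f2 b) <= exp t * (t / z) * Rabs (a - b)).
  { apply lip_exp_g. intros a. pose proof (hcl_bnd (a / z)). nra. apply lip_h; lra. }
  assert (het : 1 <= exp t) by (pose proof (exp_le' 0 t ltac:(lra)); rewrite exp_0 in H; lra).
  assert (hHf1 : H Sp (fun w => f1 (X w))).
  { apply H1lip with (exp s * (2 * s / z)); auto. apply Rmult_le_pos. lra. apply Rlt_le, Rdiv_lt_0_compat; lra. }
  assert (hHf2 : H Sp (fun w => f2 (X w))).
  { apply H1lip with (exp t * (t / z)); auto. apply Rmult_le_pos. lra. apply Rlt_le, Rdiv_lt_0_compat; lra. }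
  destruct (Efin Sp (fun w => f1 (X w)) 1 (exp s) hHf1 (fun w => hf1b (X w))) as [c1 [ec1 hc1b]].
  destruct (Efin Sp (fun w => f2 (X w)) (exp (- t)) (exp t) hHf2 (fun w => hf2b (X w))) as [c2 [ec2 hc2b]].
  pose proof (Eub_lower Sp _ _ _ hHf1 ec1 hc1) as hc1u.
  pose proof (Eub_lower Sp _ _ _ hHf2 ec2 hc2) as hc2u.
  pose proof (exp_pos (- t)) as hemt.
  pose proof (prod_formula Sp X Xs f1 1 (exp s) (exp s * (2 * s / z)) c1 hX hXs hind hsd
     ltac:(lra) hes ltac:(apply Rmult_le_pos; [lra| apply Rlt_le, Rdiv_lt_0_compat; lra]) hf1b hf1l ec1 n) as hp1.
  pose proof (prod_formula Sp X Xs f2 (exp (- t)) (exp t) (exp t * (t / z)) c2 hX hXs hind hsd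
     hemt het ltac:(apply Rmult_le_pos; [lra| apply Rlt_le, Rdiv_lt_0_compat; lra]) hf2b hf2l ec2 n) as hp2.
  set (T1 := s * (/ 10000 * xn ^ 2)). set (T2 := t * (29699 / 10000 * xn ^ 2)).
  set (P1 := fun w => prodf f1 n (fun k => Xs (S k) w)).
  set (P2 := fun w => prodf f2 n (fun k => Xs (S k) w)).
  assert (hP1H : H Sp P1).
  { apply (H_comp Omega Sp n (fun k => Xs (S k)) (prodf f1 n)). intros; apply hXs; lia.
    right. apply prodf_Clip with (exp s) (exp s * (2 * s / z)); auto.
    intros y; pose proof (hf1b y); lra. apply Rmult_le_pos; [lra| apply Rlt_le, Rdiv_lt_0_compat; lra]. }
  assert (hP2H : H Sp P2).
  { apply (H_comp Omega Sp n (fun k => Xs (S k)) (prodf f2 n)). intros; apply hXs; lia.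
    right. apply prodf_Clip with (exp t) (exp t * (t / z)); auto.
    intros y; pose proof (hf2b y); lra. apply Rmult_le_pos; [lra| apply Rlt_le, Rdiv_lt_0_compat; lra]. }
  assert (hVc : Rbar_le (Vcap Sp (fun w =>
          sum1 (fun i => Xs i w) n >= xn * sqrt (sum1 (fun i => Xs i w ^ 2) n) /\
          sum1 (fun i => Xs i w ^ 2) n >= 9 * INR n * lfun Sp X z))
          (Finite (exp (- T1) * c1 ^ n + exp (- T2) * c2 ^ n))).
  { apply Vcap_ub with (fun w => exp (- T1) * P1 w + exp (- T2) * P2 w).
    - apply H_add; apply H_scal; auto.
    - intros w. assert (0 <= P1 w) by (unfold P1; apply prodf_bnd with (exp s); intros y; pose proof (hf1b y); lra).
      assert (0 <= P2 w) by (unfold P2; apply prodf_bnd with (exp t); intros y; pose proof (hf2b y); lra).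
      pose proof (exp_pos (- T1)). pose proof (exp_pos (- T2)).
      split. apply Rplus_le_le_0_compat; apply Rmult_le_pos; lra.
      intros [e1 e2].
      assert (e2' : sum1 (fun i => Xs i w ^ 2) n >= 9 * xn ^ 2 * z ^ 2).
      { rewrite hlz in e2. replace (9 * INR n * (q * z ^ 2)) with (9 * xn ^ 2 * z ^ 2) in e2 by (unfold q; field; lra). auto. }
      assert (ep1 : P1 w = exp (s * sum1 (fun i => rcl (Xs i w / z)) n)).
      { unfold P1, f1. rewrite (prodf_exp (fun v => s * rcl (v / z)) n (fun i => Xs i w)).
        rewrite sum1_scal. auto. }
      assert (ep2 : P2 w = exp (t * sum1 (fun i => hcl (Xs i w / z)) n)).
      { unfold P2, f2. rewrite (prodf_exp (fun v => t * hcl (v / z)) n (fun i => Xs i w)).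
        rewrite sum1_scal. auto. }
      destruct (det (fun i => Xs i w) n xn z ltac:(lra) hz0 e1 e2') as [d|d].
      + assert (exp (- T1) * P1 w >= 1).
        { rewrite ep1, <- exp_plus. rewrite <- exp_0. apply Rle_ge, exp_le'. unfold T1.
          assert (s * (/ 10000 * xn ^ 2) <= s * sum1 (fun i => rcl (Xs i w / z)) n) by (apply Rmult_le_compat_l; lra).
          lra. }
        assert (0 <= exp (- T2) * P2 w) by (apply Rmult_le_pos; lra). lra.
      + assert (exp (- T2) * P2 w >= 1).
        { rewrite ep2, <- exp_plus. rewrite <- exp_0. apply Rle_ge, exp_le'. unfold T2.
          assert (t * (29699 / 10000 * xn ^ 2) <= t * sum1 (fun i => hcl (Xs i w / z)) n) by (apply Rmult_le_compat_l; lra).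
          lra. }
        assert (0 <= exp (- T1) * P1 w) by (apply Rmult_le_pos; lra). lra.
    - apply Eub_add. apply H_scal; auto. apply H_scal; auto.
      apply Eub_scal; auto. apply exp_pos. unfold Eub. unfold P1. rewrite hp1. simpl; lra.
      apply Eub_scal; auto. apply exp_pos. unfold Eub. unfold P2. rewrite hp2. simpl; lra. }
  eapply Rbar_le_trans. apply hVc. cbn [Rbar_le].
  assert (hk1 : c1 <= 1 + q / 10).
  { replace (q / 10) with (s * exp s * (4 * eta * q)) by (unfold eta; field; split; lra). lra. }
  set (K2 := 17 * eta * t + exp t * t ^ 2).
  assert (hk2 : c2 <= 1 + q * K2).
  { replace (q * K2) with (t / z * (17 * eta * lfun Sp X z / z) + exp t * t ^ 2 / z ^ 2 * lfun Sp X z).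
    lra. rewrite hlz. unfold K2. field. lra. }
  pose proof (pow_le_exp c1 (q / 10) n ltac:(lra) hk1) as g1.
  assert (hK2 : 0 <= K2) by (unfold K2; pose proof (exp_pos t); pose proof (pow2_ge_0 t); nra).
  pose proof (pow_le_exp c2 (q * K2) n ltac:(lra) hk2) as g2.
  replace (INR n * (q / 10)) with (xn ^ 2 / 10) in g1 by (unfold q; field; lra).
  replace (INR n * (q * K2)) with (xn ^ 2 * K2) in g2 by (unfold q; field; lra).
  assert (hK2b : K2 <= 17 / 2000 + 7 / 16).
  { unfold K2, t. pose proof exp_half. assert (17 * eta * (1/2) <= 17/2000) by lra.
    assert (exp (1/2) * (1/2) ^ 2 <= 7/4 * (1/2)^2) by (apply Rmult_le_compat_r; [apply pow2_ge_0|lra]). lra. }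
  set (Y := xn ^ 2). assert (hY : 100 <= Y) by (unfold Y; nra).
  assert (t1 : exp (- T1) * c1 ^ n <= exp (- (103/100) * Y)).
  { eapply Rle_trans. apply Rmult_le_compat_l. pose proof (exp_pos (- T1)); lra. apply g1.
    rewrite <- exp_plus. apply exp_le'. unfold T1, s. fold Y. lra. }
  assert (t2 : exp (- T2) * c2 ^ n <= exp (- (103/100) * Y)).
  { eapply Rle_trans. apply Rmult_le_compat_l. pose proof (exp_pos (- T2)); lra. apply g2.
    rewrite <- exp_plus. apply exp_le'. unfold T2, t. fold Y.
    assert (Y * K2 <= Y * (17 / 2000 + 7 / 16)) by (apply Rmult_le_compat_l; lra). lra. }
  assert (t3 : 2 * exp (- (103/100) * Y) <= exp (- Y)).
  { replace (- (103/100) * Y) with (- Y + - (3/100 * Y)) by lra. rewrite exp_plus.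
    pose proof (exp_ineq1_le (3/100 * Y)). pose proof (exp_pos (3/100 * Y)).
    assert (exp (- (3/100 * Y)) * exp (3/100 * Y) = 1) by (rewrite <- exp_plus; replace (- (3 / 100 * Y) + 3 / 100 * Y) with 0 by lra; apply exp_0).
    pose proof (exp_pos (- Y)). pose proof (exp_pos (- (3/100 * Y))).
    assert (exp (- (3/100 * Y)) <= 1/2) by nra.
    nra. }
  assert (t4 : exp (- Y) <= exp (- Y + eps * Y)).
  { apply exp_le'. assert (0 <= eps * Y) by (apply Rmult_le_pos; lra). lra. }
  lra.
Qed.
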